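(* Let $K$ be a valued field, $d\ge1$, and $C\subseteq K^d$ convex. Then $C$ is an open subset of its affine span $\operatorname{aff}(C)$ (with the subspace topology induced by the valuation topology on $K^d$). Consequently, every convex subset of $K^d$ is closed in $K^d$.
   Context: $K$ is a field with a valuation $\nu:K\to\Gamma\cup\{\infty\}$, valuation ring $\mathcal{O}$. A set $X\subseteq K^d$ is convex if it is closed under combinations $\sum_{i=1}^n\alpha_ix_i$ with $x_i\in X$, $\alpha_i\in\mathcal{O}$, $\sum\alpha_i=1$. On $K^d$ put $\nu(x_1,\dots,x_d)=\min_i\nu(x_i)$; the valuation topology on $K^d$ has as basis the balls $\{x:\nu(x-c)>r\}$ ($c\in K^d$, $r\in\Gamma$), equivalently it is the product topology of the valuation topology on $K$. The affine span $\operatorname{aff}(X)$ is $\{\sum_{i=1}^n\alpha_ix_i: x_i\in X,\alpha_i\in K,\sum\alpha_i=1\}$. *)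

(* Defs.v *)
From mathcomp Require Import all_boot all_order all_algebra.
Set Implicit Arguments. Unset Strict Implicit. Unset Printing Implicit Defensive.
Import GRing.Theory.
Local Open Scope ring_scope.

(* Value group Gamma: an abelian group (zmodType) with a strict total order
   [lt] compatible with addition.  The element [None : option Gamma] plays
   the role of infinity. *)
Record ordered_group (G : zmodType) (lt : rel G) : Prop := {
  og_irr : forall x, ~~ lt x x;
  og_trans : forall x y z, lt x y -> lt y z -> lt x z;
  og_total : forall x y, [\/ lt x y, x = y | lt y x];
  og_add : forall x y z, lt x y -> lt (x + z) (y + z)
}.

Definition leo (G : zmodType) (lt : rel G) (a b : option G) : bool :=
  match a, b with
  | _, None => true
  | None, Some _ => false
  | Some x, Some y => (x == y) || lt x y
  end.

Definition ltv (G : zmodType) (lt : rel G) (r : G) (a : option G) : bool :=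
  match a with None => true | Some y => lt r y end.

Definition oadd (G : zmodType) (a b : option G) : option G :=
  match a, b with Some x, Some y => Some (x + y) | _, _ => None end.

Record valuation (K : fieldType) (G : zmodType) (lt : rel G)
    (nu : K -> option G) : Prop := {
  val_group : ordered_group lt;
  val_inf : forall x, nu x = None <-> x = 0;
  val_mul : forall x y, nu (x * y) = oadd (nu x) (nu y);
  val_add : forall x y, leo lt (nu x) (nu (x + y)) || leo lt (nu y) (nu (x + y))
}.

Definition vring (K : fieldType) (G : zmodType) (lt : rel G)
    (nu : K -> option G) (a : K) : Prop := leo lt (Some 0) (nu a).

Definition vconvex (K : fieldType) (G : zmodType) (lt : rel G)
    (nu : K -> option G) (d : nat) (X : 'rV[K]_d -> Prop) : Prop :=
  forall (n : nat) (x : 'I_n -> 'rV[K]_d) (a : 'I_n -> K),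
    (forall i, X (x i)) -> (forall i, vring lt nu (a i)) ->
    \sum_(i < n) a i = 1 -> X (\sum_(i < n) a i *: x i).

Definition aff (K : fieldType) (d : nat) (X : 'rV[K]_d -> Prop) (y : 'rV[K]_d) : Prop :=
  exists (n : nat) (x : 'I_n -> 'rV[K]_d) (a : 'I_n -> K),
    (forall i, X (x i)) /\ \sum_(i < n) a i = 1 /\ y = \sum_(i < n) a i *: x i.

(* ball { x | nu(x - c) > r }, where nu(v) = min_i nu(v_i); since nu(v) > r
   iff every coordinate has valuation > r, this is written coordinatewise *)
Definition vball (K : fieldType) (G : zmodType) (lt : rel G)
    (nu : K -> option G) (d : nat) (c : 'rV[K]_d) (r : G) (x : 'rV[K]_d) : Prop :=
  forall i : 'I_d, ltv lt r (nu (x 0 i - c 0 i)).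

Definition vopen (K : fieldType) (G : zmodType) (lt : rel G)
    (nu : K -> option G) (d : nat) (U : 'rV[K]_d -> Prop) : Prop :=
  forall x, U x -> exists r : G, forall y, vball lt nu x r y -> U y.

Definition vclosed (K : fieldType) (G : zmodType) (lt : rel G)
    (nu : K -> option G) (d : nat) (F : 'rV[K]_d -> Prop) : Prop :=
  vopen lt nu (fun x => ~ F x).

Definition vopen_in (K : fieldType) (G : zmodType) (lt : rel G)
    (nu : K -> option G) (d : nat) (A V : 'rV[K]_d -> Prop) : Prop :=
  (forall x, V x -> A x) /\
  exists U, vopen lt nu U /\ forall x, V x <-> (U x /\ A x).

(* Main.v *)
Require Import Defs.
From mathcomp Require Import all_boot all_order all_algebra.
From Stdlib Require Import Classical.
Set Implicit Arguments. Unset Strict Implicit. Unset Printing Implicit Defensive.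
Import GRing.Theory.
Local Open Scope ring_scope.

Lemma ltv_leo (G : zmodType) (lt : rel G) r a b :
  ordered_group lt -> ltv lt r a -> leo lt a b -> ltv lt r b.
Proof.
move=> og; case: a => [x|]; case: b => [y|] //= h /orP[/eqP<-//|].
exact: og_trans.
Qed.

Lemma ltv_add (K : fieldType) (G : zmodType) (lt : rel G) nu r (x y : K) :
  valuation lt nu -> ltv lt r (nu x) -> ltv lt r (nu y) -> ltv lt r (nu (x + y)).
Proof.
move=> hv hx hy; case/orP: (val_add hv x y) => h.
  exact: (ltv_leo (val_group hv) hx h).
exact: (ltv_leo (val_group hv) hy h).
Qed.

Lemma nu0 (K : fieldType) (G : zmodType) (lt : rel G) nu :
  valuation lt nu -> nu (0 : K) = None.
Proof. by move=> hv; apply/(val_inf hv). Qed.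

Lemma ltv_sum (K : fieldType) (G : zmodType) (lt : rel G) nu r n (F : 'I_n -> K) :
  valuation lt nu -> (forall i, ltv lt r (nu (F i))) -> ltv lt r (nu (\sum_(i < n) F i)).
Proof.
move=> hv hF; apply: (big_ind (fun v => ltv lt r (nu v))) => //.
- by rewrite (nu0 hv).
- by move=> x y; apply: ltv_add.
Qed.

Lemma og_double0 (G : zmodType) (lt : rel G) (h : G) :
  ordered_group lt -> h + h = 0 -> h = 0.
Proof.
move=> og e; case: (og_total og h 0) => [l|//|l].
- have := og_add og h l; rewrite e add0r => l2.
  by have := og_irr og h; rewrite (og_trans og l l2).
- have := og_add og h l; rewrite e add0r => l2.
  by have := og_irr og 0; rewrite (og_trans og l l2).
Qed.

Lemma nu1 (K : fieldType) (G : zmodType) (lt : rel G) nu :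
  valuation lt nu -> nu (1 : K) = Some 0.
Proof.
move=> hv; case e: (nu 1) => [g|]; last by have := proj1 (val_inf hv 1) e; move/eqP; rewrite oner_eq0.
have := val_mul hv 1 1; rewrite mulr1 e /= => -[] h.
by congr Some; apply/eqP; rewrite -(addrI g (esym (etrans (addr0 g) h))).
Qed.

Lemma nuN1 (K : fieldType) (G : zmodType) (lt : rel G) nu :
  valuation lt nu -> nu (-1 : K) = Some 0.
Proof.
move=> hv; case e: (nu (-1)) => [g|]; last first.
  by have := proj1 (val_inf hv (-1)) e; move/eqP; rewrite oppr_eq0 oner_eq0.
have := val_mul hv (-1) (-1); rewrite mulrNN mulr1 (nu1 hv) e /= => -[] h.
by rewrite (og_double0 (val_group hv) (esym h)).
Qed.

Lemma nuN (K : fieldType) (G : zmodType) (lt : rel G) nu (x : K) :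
  valuation lt nu -> nu (- x) = nu x.
Proof.
move=> hv; rewrite -mulN1r (val_mul hv) (nuN1 hv); case: (nu x) => //= y.
by rewrite add0r.
Qed.

Lemma ub (G : zmodType) (lt : rel G) (s : seq G) :
  ordered_group lt -> exists r, forall x, x \in s -> (x == r) || lt x r.
Proof.
move=> og; elim: s => [|a s [r IH]]; first by exists 0.
case: (og_total og a r) => [l|e|l].
- exists r => x; rewrite in_cons => /orP[/eqP->|/IH//]; by rewrite l orbT.
- exists r => x; rewrite in_cons => /orP[/eqP->|/IH//]; by rewrite e eqxx.
- exists a => x; rewrite in_cons => /orP[->//|/IH/orP[/eqP->|h]].
    by rewrite l orbT.
  by rewrite (og_trans og h l) orbT.
Qed.

Lemma ubf (G : zmodType) (lt : rel G) (T : finType) (f : T -> G) :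
  ordered_group lt -> exists r, forall x, (f x == r) || lt (f x) r.
Proof.
move=> og; have [r H] := ub (map f (enum T)) og; exists r => x.
by apply: H; apply: map_f; rewrite mem_enum.
Qed.

Lemma bound (K : fieldType) (G : zmodType) (lt : rel G) nu m n (P : 'M[K]_(m, n)) (t : G) :
  valuation lt nu -> exists r, forall v : 'rV_m, (forall i, ltv lt r (nu (v 0 i))) ->
    forall j, ltv lt t (nu ((v *m P) 0 j)).
Proof.
move=> hv; have og := val_group hv.
have [r H] := ubf (fun p : 'I_m * 'I_n =>
  match nu (P p.1 p.2) with Some g => t - g | None => 0 end) og.
exists r => v hvi j; rewrite mxE; apply: ltv_sum => // i.
rewrite (val_mul hv); have := hvi i; have := H (i, j) => /=.
case: (nu (v 0 i)) => [a|//]; case: (nu (P i j)) => [g|//] /= hle hra.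
have l : lt (t - g) a by case/orP: hle => [/eqP->//|h]; exact: og_trans h hra.
by have := og_add og g l; rewrite subrK.
Qed.

Lemma maxP (P : nat -> Prop) d : P 0%N -> (forall k, P k -> (k <= d)%N) ->
  exists k, P k /\ forall j, P j -> (j <= k)%N.
Proof.
move=> P0 Pb.
suff H : forall m k, P k -> (d - k <= m)%N -> exists k, P k /\ forall j, P j -> (j <= k)%N.
  exact: (H d 0%N P0 (leq_subr _ _)).
elim=> [|m IH] k Pk hk.
  exists k; split=> // j Pj; apply: leq_trans (Pb _ Pj) _.
  by rewrite -subn_eq0 -leqn0.
case: (classic (exists j, P j /\ (k < j)%N)) => [[j [Pj kj]]|nj].
  apply: (IH j Pj); have := Pb _ Pj => jd.
  rewrite -ltnS; apply: leq_trans hk; rewrite ltn_sub2l //.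
  exact: leq_trans kj jd.
exists k; split=> // j Pj; rewrite leqNgt; apply/negP => kj; apply: nj; by exists j.
Qed.

Lemma leo_trans (G : zmodType) (lt : rel G) a b c :
  ordered_group lt -> leo lt a b -> leo lt b c -> leo lt a c.
Proof.
move=> og; case: a => [x|]; case: b => [y|]; case: c => [z|] //=.
move=> /orP[/eqP->//|h1] /orP[/eqP<-|h2]; first by rewrite h1 orbT.
by rewrite (og_trans og h1 h2) orbT.
Qed.

Lemma vring_add (K : fieldType) (G : zmodType) (lt : rel G) nu (x y : K) :
  valuation lt nu -> vring lt nu x -> vring lt nu y -> vring lt nu (x + y).
Proof.
move=> hv hx hy; case/orP: (val_add hv x y) => h.
  exact: (leo_trans (val_group hv) hx h).
exact: (leo_trans (val_group hv) hy h).
Qed.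

Lemma vring_sum (K : fieldType) (G : zmodType) (lt : rel G) nu n (F : 'I_n -> K) :
  valuation lt nu -> (forall i, vring lt nu (F i)) -> vring lt nu (\sum_(i < n) F i).
Proof.
move=> hv hF; apply: (big_ind (vring lt nu)) => //.
- by rewrite /vring (nu0 hv).
- by move=> x y; apply: vring_add.
Qed.

Lemma vringN (K : fieldType) (G : zmodType) (lt : rel G) nu (x : K) :
  valuation lt nu -> vring lt nu x -> vring lt nu (- x).
Proof. by move=> hv; rewrite /vring (nuN _ hv). Qed.

Lemma vring1 (K : fieldType) (G : zmodType) (lt : rel G) nu :
  valuation lt nu -> vring lt nu (1 : K).
Proof. by move=> hv; rewrite /vring (nu1 hv) /= eqxx. Qed.

Lemma ltv_pos (G : zmodType) (lt : rel G) a : ltv lt 0 a -> leo lt (Some 0) a.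
Proof. by case: a => //= y ->; rewrite orbT. Qed.

Lemma comb (K : fieldType) d n (c0 : 'rV[K]_d) (B : 'M_(n, d)) (u : 'rV_n) :
  c0 + u *m B = \sum_(i < n.+1)
    (if unlift ord0 i is Some j then u 0 j else 1 - \sum_j u 0 j) *:
    (if unlift ord0 i is Some j then c0 + row j B else c0).
Proof.
rewrite big_ord_recl unlift_none.

rewrite (eq_bigr (fun i => u 0 i *: (c0 + row i B))); last first.
  by move=> i _; rewrite liftK.
rewrite mulmx_sum_row.
under eq_bigr => i _ do rewrite scalerDr.
rewrite big_split /= -scaler_suml scalerBl scale1r.
by rewrite addrA subrK.
Qed.

Lemma conv_comb (K : fieldType) (G : zmodType) (lt : rel G) nu d n
  (C : 'rV[K]_d -> Prop) c0 (B : 'M_(n, d)) (u : 'rV_n) :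
  valuation lt nu -> vconvex lt nu C -> C c0 -> (forall i, C (c0 + row i B)) ->
  (forall j, vring lt nu (u 0 j)) -> C (c0 + u *m B).
Proof.
move=> hv hC C0 HB hu; rewrite comb; apply: hC.
- by move=> i; case: (unlift ord0 i).
- move=> i; case: (unlift ord0 i) => [j|]; first exact: hu.
  apply: vring_add => //; first exact: vring1.
  by apply: vringN => //; apply: vring_sum.
- rewrite big_ord_recl unlift_none.
  rewrite [X in _ + X = _](eq_bigr (fun i => u 0 i)); last by move=> i _; rewrite liftK.
  by rewrite subrK.
Qed.

Lemma aff_comb (K : fieldType) d n
  (C : 'rV[K]_d -> Prop) c0 (B : 'M_(n, d)) (u : 'rV_n) :
  C c0 -> (forall i, C (c0 + row i B)) -> aff C (c0 + u *m B).
Proof.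
move=> C0 HB; rewrite comb.
exists n.+1, (fun i => if unlift ord0 i is Some j then c0 + row j B else c0),
  (fun i => if unlift ord0 i is Some j then u 0 j else 1 - \sum_j u 0 j).
split; last split; last reflexivity.
- by move=> i; case: (unlift ord0 i).
- rewrite big_ord_recl unlift_none.
  rewrite [X in _ + X = _](eq_bigr (fun i => u 0 i)); last by move=> i _; rewrite liftK.
  by rewrite subrK.
Qed.

Lemma C3 (K : fieldType) (G : zmodType) (lt : rel G) nu d
  (C : 'rV[K]_d -> Prop) a b c :
  valuation lt nu -> vconvex lt nu C -> C a -> C b -> C c -> C (a + b - c).
Proof.
move=> hv hC Ca Cb Cc.
pose x := fun i : 'I_3 => match val i with 0 => a | 1 => b | _ => c end.
pose al := fun i : 'I_3 => match val i with 0 => 1 | 1 => 1 | _ => -1 : K end.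
have := hC 3%N x al.
rewrite !big_ord_recl !big_ord0 /= /x /al /= !scale1r scaleN1r !addr0 !addrA.
apply.
- by case=> -[|[|[|]]].
- case=> -[|[|[|]]] //= _; try exact: vring1 hv.
  by apply: vringN => //; exact: vring1.
- by rewrite addrK.
Qed.


Lemma vballE (K : fieldType) (G : zmodType) (lt : rel G) nu d (c y : 'rV[K]_d) r :
  vball lt nu c r y <-> forall i, ltv lt r (nu ((y - c) 0 i)).
Proof. by split=> h i; move: (h i); rewrite !mxE. Qed.

Lemma lin (V : zmodType) (a b c : V) : a + (b - c) + c - a = b.
Proof. by rewrite addrA subrK [a + b]addrC addrK. Qed.

Lemma subm (K : fieldType) m1 m2 n (A A' : 'M[K]_(m1, n)) (B : 'M_(m2, n)) :
  (A <= B)%MS -> (A' <= B)%MS -> (A - A' <= B)%MS.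
Proof. by move=> h1 h2; rewrite -scaleN1r addmx_sub ?scalemx_sub. Qed.

Lemma getB (K : fieldType) d
  (C : 'rV[K]_d -> Prop) c0 :
  exists n (B : 'M_(n, d)), (forall i, C (c0 + row i B)) /\
    forall c, C c -> (c - c0 <= B)%MS.
Proof.
pose P k := exists n (B : 'M[K]_(n, d)), (forall i, C (c0 + row i B)) /\ \rank B = k.
have P0 : P 0%N by exists 0%N, 0; split=> [[]//|]; rewrite mxrank0.
have Pb : forall k, P k -> (k <= d)%N by move=> k [n [B [_ <-]]]; exact: rank_leq_col.
have [k [[n [B [HB rB]]] kmax]] := maxP P0 Pb.
exists n, B; split=> // c Cc; apply/negPn/negP => nsub.
have lt1 : (B < col_mx B (c - c0))%MS.
  have := submx_refl (col_mx B (c - c0)); rewrite col_mx_sub => /andP[s1 _].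
  by rewrite ltmxE s1 /= col_mx_sub negb_and nsub orbT.
have : P (\rank (col_mx B (c - c0))).
  exists (n + 1)%N, (col_mx B (c - c0)); split=> // i.
  rewrite -(splitK i); case: (split i) => j /=; first by rewrite rowKu.
  rewrite rowKd (ord1 j).
  have -> : row 0 (c - c0) = c - c0 by apply/rowP => l; rewrite mxE.
  by rewrite addrC subrK.
move/kmax; rewrite -rB; move: lt1; rewrite ltmxErank => /andP[_].
by rewrite ltnNge => /negP.
Qed.

Theorem proposition2p15 (K : fieldType) (G : zmodType) (lt : rel G)
    (nu : K -> option G) (d : nat) (C : 'rV[K]_d -> Prop) :
  valuation lt nu -> (1 <= d)%N -> vconvex lt nu C ->
  vopen_in lt nu (aff C) C /\ vclosed lt nu C.
Proof.
move=> hv hd hC; have og := val_group hv.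
have CA : forall y, C y -> aff C y.
  move=> y Cy; exists 1%N, (fun=> y), (fun=> 1); split=> //.
  by rewrite !big_ord1 scale1r.
case: (classic (exists c0, C c0)) => [[c0 C0]|nC]; last first.
  split.
    split; first exact: CA.
    exists C; split; first by move=> x Cx; exfalso; apply: nC; exists x.
    move=> x; split=> [Cx|[]//]; split=> //; exact: CA.
  by move=> x _; exists 0 => y _ Cy; apply: nC; exists y.
have [n [B [HB HS]]] := getB C c0.
have affB : forall y, aff C y <-> (y - c0 <= B)%MS.
  move=> y; split.
    move=> [m [x [a [Hx [Ha ->]]]]].
    have -> : \sum_(i < m) a i *: x i - c0 = \sum_(i < m) a i *: (x i - c0).
      rewrite -[X in _ - X = _]scale1r -Ha scaler_suml -sumrB.
      by apply: eq_bigr => i _; rewrite scalerBr.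
    by apply: summx_sub => i _; apply: scalemx_sub; apply: HS.
  move=> hy; rewrite -(subrK c0 y) -(mulmxKpV hy) addrC.
  exact: aff_comb.
have [r0 Hr0] := bound (pinvmx B) 0 hv.
have key : forall y, (y - c0 <= B)%MS ->
    (forall i, ltv lt r0 (nu ((y - c0) 0 i))) -> C y.
  move=> y hy hb; rewrite -(subrK c0 y) -(mulmxKpV hy) addrC.
  apply: (conv_comb hv hC C0 HB) => j; apply: ltv_pos; exact: Hr0.
have Csub : forall c, C c -> (c - c0 <= B)%MS by [].
split.
  split; first exact: CA.
  exists (fun y => exists c, C c /\ forall i, ltv lt r0 (nu ((y - c) 0 i))).
  split.
    move=> y [c [Cc Hy]]; exists r0 => z /vballE Hz; exists c; split=> // i.
    have -> : z - c = (z - y) + (y - c) by rewrite addrA subrK.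
    by rewrite mxE; apply: ltv_add.
  move=> y; split.
    move=> Cy; split; last exact: CA.
    by exists y; split=> // i; rewrite subrr mxE (nu0 hv).
  move=> [[c [Cc Hy]] /affB ay].
  have Cz : C (c0 + (y - c)).
    apply: key; rewrite [c0 + _]addrC addrK //.
    have -> : y - c = (y - c0) - (c - c0) by rewrite opprB addrA subrK.
    exact: subm (HS _ Cc).
  have := C3 hv hC Cz Cc C0.
  by rewrite lin.
move=> x nCx; case: (boolP (x - c0 <= B)%MS) => hx.
  exists r0 => y /vballE Hy Cy; apply: nCx.
  have Cz : C (c0 + (x - y)).
    apply: key; rewrite [c0 + _]addrC addrK //.
      have -> : x - y = (x - c0) - (y - c0) by rewrite opprB addrA subrK.
      exact: subm (HS _ Cy).
    by move=> i; rewrite -opprB mxE (nuN _ hv).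
  have := C3 hv hC Cz Cy C0.
  by rewrite lin.
have : (x - c0) *m cokermx B != 0 by rewrite -submxE.
case: (pickP (fun j => ((x - c0) *m cokermx B) 0 j != 0)) => [j hj _|h]; last first.
  by move/negP => H; exfalso; apply: H; apply/eqP/rowP => j; have := h j; rewrite /= !mxE => /negbFE/eqP.
case e: (nu (((x - c0) *m cokermx B) 0 j)) => [g|]; last first.
  by move: hj; rewrite (proj1 (val_inf hv _) e) eqxx.
have [r Hr] := bound (cokermx B) g hv.
exists r => y /vballE Hy Cy.
have := HS _ Cy; rewrite submxE => /eqP.
have -> : y - c0 = (x - c0) + (y - x) by rewrite [(x - c0) + _]addrC addrA subrK.
rewrite mulmxDl => /rowP /(_ j); rewrite !mxE => /eqP.
rewrite addrC addr_eq0 => /eqP eb; move: e; rewrite mxE => e.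
have := Hr _ Hy j; rewrite mxE eb (nuN _ hv) e /=.
by rewrite (negbTE (og_irr og g)).
Qed.
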